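(* In the setting described in the context, the process $W(t)$ restricted to the set $\mathcal W$ of allocation states is time reversible; more precisely, for all $W,W'\in\mathcal W$ with $W\neq W'$, $$\binom{\alpha}{W}e^{\gamma\Psi(W)}P_{W,W'}=\binom{\alpha}{W'}e^{\gamma\Psi(W')}P_{W',W},$$ where $\binom{\alpha}{W}:=\frac{\prod_x\alpha_x!}{\prod_{x,y}W_{xy}!}$, $P_{W,W'}$ is the transition rate of $W(t)$ from $W$ to $W'$, and $$\Psi(W)=\sum_{y\in\mathcal X}\sum_{s=0}^{W_y}\Big[\lambda_y-\frac{k_cs}{\beta_y}\Big]+k_a\sum_{x,y\in\mathcal X}\sum_{s=0}^{W_{xy}}s .$$
   Context: $\mathcal X$ is a finite set of units, $\mathcal G=(\mathcal X,\mathcal E)$ a directed graph, $N_x=\{y:(x,y)\in\mathcal E\}$, $\alpha_x,\beta_x$ non-negative integers. A partial allocation state is a matrix $W\in\mathbb N^{\mathcal X\times\mathcal X}$ with $W_{xy}=0$ whenever $(x,y)\notin\mathcal E$, $W^x:=\sum_yW_{xy}\le\alpha_x$, $W_y:=\sum_xW_{xy}\le\beta_y$; it is an allocation state if $W^x=\alpha_x$ for all $x$; $\mathcal W_p,\mathcal W$ denote these sets; $e_{xy}$ is the matrix unit. Fix reals $\lambda_y$, $k_c,k_a\ge0$, $\gamma>0$ and let $f_{xy}(W)=\lambda_y-k_cW_y/\beta_y+k_aW_{xy}$ (in $\Psi$ the term with $s=0$ contributes $\lambda_y$, i.e. $0/0$ is read as $0$). Let $\mathcal X^x(W)=\{y\in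 N_x:W_y<\beta_y\}$ and $p_y(W,x)=e^{\gamma f_{xy}(W+e_{xy})}/\sum_{y'\in\mathcal X^x(W)}e^{\gamma f_{xy'}(W+e_{xy'})}$ for $y\in\mathcal X^x(W)$. Let $P_{\rm all}(W,x),P_{\rm dis}(W,x)\ge0$ with sum $1$, $P_{\rm all}(W,x)=0$ if $W^x=\alpha_x$, $P_{\rm dis}(W,x)=0$ if $W^x=0$. $W(t)$ is the continuous-time Markov process on $\mathcal W_p$ in which each unit $x$ activates at the times of an independent Poisson clock of rate $\nu_x\ge0$; upon activation in state $W$, with probability $P_{\rm all}(W,x)$ unit $x$ chooses $y^*\in\mathcal X^x(W)$ with probability $p_{y^*}(W,x)$ and the state becomes $W+e_{xy^*}$ (nothing happens if $\mathcal X^x(W)=\emptyset$); with probability $P_{\rm dis}(W,x)$ it chooses $\bar y$ with probability $W_{x\bar y}/W^x$, then $y^*\in\mathcal X^x(W-e_{x\bar y})$ with probability $p_{y^*}(W-e_{x\bar y},x)$, and the state becomes $W-e_{x\bar y}+e_{xy^*}$. *)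

(* Defs.v *)
From HB Require Import structures.
From mathcomp Require Import all_boot all_order all_algebra.
From mathcomp Require Import all_classical all_reals all_analysis.
Set Implicit Arguments. Unset Strict Implicit. Unset Printing Implicit Defensive.
Import Order.TTheory GRing.Theory Num.Theory.
Local Open Scope ring_scope.

Section Model.
Variables (X : finType) (E : rel X) (alpha beta : X -> nat).

Definition state := {ffun X * X -> nat}.

(* W^x = sum_y W_xy  and  W_y = sum_x W_xy *)
Definition rowsum (W : state) (x : X) : nat := (\sum_(y : X) W (x, y))%N.
Definition colsum (W : state) (y : X) : nat := (\sum_(x : X) W (x, y))%N.

Definition partial_alloc (W : state) : Prop :=
  [/\ forall x y, ~~ E x y -> W (x, y) = 0%N,
      forall x, (rowsum W x <= alpha x)%N &
      forall y, (colsum W y <= beta y)%N].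

Definition alloc (W : state) : Prop :=
  partial_alloc W /\ forall x, rowsum W x = alpha x.

(* W + e_xy and W - e_xy (the latter used only when W_xy > 0). *)
Definition add_e (W : state) (x y : X) : state :=
  [ffun p => (W p + (p == (x, y)))%N].
Definition sub_e (W : state) (x y : X) : state :=
  [ffun p => (W p - (p == (x, y)))%N].

Variable R : realType.
Variables (lambda : X -> R) (kc ka gamma : R).

Definition f (W : state) (x y : X) : R :=
  lambda y - kc * (colsum W y)%:R / (beta y)%:R + ka * (W (x, y))%:R.

Definition avail (W : state) (x : X) : pred X :=
  fun y => E x y && (colsum W y < beta y)%N.

Definition pchoice (W : state) (x y : X) : R :=
  expR (gamma * f (add_e W x y) x y) /
  \sum_(y' | avail W x y') expR (gamma * f (add_e W x y') x y').

Variables (nu : X -> R) (Pall Pdis : state -> X -> R).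

Definition rate (W W' : state) : R :=
  \sum_(x : X) nu x *
    (Pall W x *
       \sum_(y | avail W x y) pchoice W x y * (add_e W x y == W')%:R
   + Pdis W x *
       \sum_(yb | (0 < W (x, yb))%N)
          ((W (x, yb))%:R / (rowsum W x)%:R) *
          \sum_(y | avail (sub_e W x yb) x y)
             pchoice (sub_e W x yb) x y
             * (add_e (sub_e W x yb) x y == W')%:R).

(* Potential Psi(W); the s = 0 term contributes lambda_y (0/0 read as 0,
   which is MathComp's convention x / 0 = 0). *)
Definition Psi (W : state) : R :=
  \sum_(y : X) \sum_(s < (colsum W y).+1) (lambda y - kc * s%:R / (beta y)%:R)
  + ka * \sum_(x : X) \sum_(y : X) \sum_(s < (W (x, y)).+1) (s : nat)%:R.

Definition multinom (W : state) : R :=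
  (\prod_(x : X) (alpha x)`!)%:R / (\prod_(p : X * X) (W p)`!)%:R.

End Model.

(* Main.v *)
Require Import Defs.
From HB Require Import structures.
From mathcomp Require Import all_boot all_order all_algebra.
From mathcomp Require Import all_classical all_reals all_analysis.
From mathcomp Require Import ring lra zify.
Import Order.TTheory GRing.Theory Num.Theory.
Local Open Scope ring_scope.

Section H.
Variables (X : finType) (R : realType).

Lemma colsum_add (V : state X) x y y' :
  colsum (add_e V x y) y' = (colsum V y' + (y' == y))%N.
Proof.
rewrite /colsum. under eq_bigr do rewrite ffunE. rewrite big_split /=; congr (_ + _)%N.
case: (eqVneq y' y) => [->|ne].
  rewrite (bigD1 x) //= eqxx big1 // => x' /negbTE nx. by rewrite xpair_eqE nx.
rewrite big1 // => x' _. by rewrite xpair_eqE (negbTE ne) andbF.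
Qed.

Lemma sum_ord_add (h : nat -> R) n (b : bool) :
  \sum_(s < (n + b).+1) h s = \sum_(s < n.+1) h s + (if b then h n.+1 else 0).
Proof.
case: b; last by rewrite addn0 addr0.
by rewrite addn1 big_ord_recr.
Qed.

Lemma sum_pick (Y : finType) (c : R) (y : Y) (g : Y -> R) :
  \sum_(y' : Y) (g y' + (if y' == y then c else 0)) = \sum_y' g y' + c.
Proof. by rewrite big_split /= -big_mkcond big_pred1_eq. Qed.

Variables (beta : X -> nat) (lambda : X -> R) (kc ka : R).

Lemma Psi_add (V : state X) x y :
  Psi beta lambda kc ka (add_e V x y) = Psi beta lambda kc ka V + f beta lambda kc ka (add_e V x y) x y.
Proof.
rewrite /Psi /f.
have -> : \sum_(y0 : X) \sum_(s < (colsum (add_e V x y) y0).+1)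
    (lambda y0 - kc * s%:R / (beta y0)%:R) =
  \sum_(y0 : X) (\sum_(s < (colsum V y0).+1) (lambda y0 - kc * s%:R / (beta y0)%:R)
   + if y0 == y then lambda y - kc * (colsum (add_e V x y) y)%:R / (beta y)%:R else 0).
  apply: eq_bigr => y0 _; rewrite colsum_add (sum_ord_add (fun s : nat => lambda y0 - kc * s%:R / (beta y0)%:R)).
  case: eqP => // ->. by rewrite colsum_add eqxx addn1.
rewrite sum_pick.
have -> : \sum_(x0 : X) \sum_(y0 : X) \sum_(s < (add_e V x y (x0, y0)).+1) (s : nat)%:R =
  \sum_(x0 : X) (\sum_(y0 : X) \sum_(s < (V (x0, y0)).+1) (s : nat)%:R
   + if x0 == x then (add_e V x y (x, y))%:R else 0 :> R).
  apply: eq_bigr => x0 _.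
  have -> : \sum_(y0 : X) \sum_(s < (add_e V x y (x0, y0)).+1) (s : nat)%:R =
     \sum_(y0 : X) (\sum_(s < (V (x0, y0)).+1) (s : nat)%:R
     + if y0 == y then (if x0 == x then (add_e V x y (x, y))%:R else 0) else 0 :> R).
    apply: eq_bigr => y0 _; rewrite ffunE (sum_ord_add (fun s : nat => s%:R)) xpair_eqE.
    case: (x0 == x) /eqP => [->|]; case: (y0 == y) /eqP => [->|] //=.
    by rewrite ffunE eqxx addn1.
  by rewrite sum_pick.
rewrite sum_pick. ring.
Qed.

Lemma multinom_add (alpha : X -> nat) (V : state X) x y :
  multinom alpha R (add_e V x y) * (add_e V x y (x, y))%:R = multinom alpha R V.
Proof.
rewrite /multinom (bigD1 (x, y)) //= [in RHS](bigD1 (x, y)) //=.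
have -> : \prod_(i | i != (x, y)) (add_e V x y i)`! = \prod_(i | i != (x, y)) (V i)`!.
  apply: eq_bigr => i /negbTE ni; by rewrite ffunE ni addn0.
rewrite ffunE eqxx addn1 factS !natrM.
set A := (\prod_(x0 : X) (alpha x0)`!)%:R.
set N := (\prod_(i | i != (x, y)) (V i)`!)%:R.
have hN : N != 0 :> R by rewrite pnatr_eq0 -lt0n prodn_gt0 // => i; exact: fact_gt0.
have hF : ((V (x, y))`!)%:R != 0 :> R by rewrite pnatr_eq0 -lt0n fact_gt0.
have hS : ((V (x, y)).+1)%:R != 0 :> R by rewrite pnatr_eq0.
field. by rewrite hN hF addrC natr1 hS.
Qed.
End H.

Section M.
Variables (X : finType) (E : rel X) (alpha beta : X -> nat) (R : realType)
  (lambda : X -> R) (kc ka gamma : R) (nu : X -> R).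

Lemma core (V : state X) x y yb (a : R) :
  multinom alpha R (add_e V x yb) * expR (gamma * Psi beta lambda kc ka (add_e V x yb))
   * (nu x * ((add_e V x yb (x, yb))%:R / a) * pchoice E beta lambda kc ka gamma V x y * 1)
  = multinom alpha R (add_e V x y) * expR (gamma * Psi beta lambda kc ka (add_e V x y))
   * (nu x * ((add_e V x y (x, y))%:R / a) * pchoice E beta lambda kc ka gamma V x yb * 1).
Proof.
have eg : forall p q : R, expR (gamma * (p + q)) = expR (gamma * p) * expR (gamma * q).
  by move=> p q; rewrite mulrDr expRD.
rewrite /pchoice !Psi_add.
set m1 := multinom alpha R (add_e V x yb). set m2 := multinom alpha R (add_e V x y).
set u1 := (add_e V x yb (x, yb))%:R. set u2 := (add_e V x y (x, y))%:R.
set pV := Psi beta lambda kc ka V.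
set f1 := f beta lambda kc ka (add_e V x yb) x yb.
set f2 := f beta lambda kc ka (add_e V x y) x y.
set D := \sum_(_ | _) _.
have h1 : m1 * u1 = multinom alpha R V by apply: multinom_add.
have h2 : m2 * u2 = multinom alpha R V by apply: multinom_add.
clearbody pV f1 f2.
rewrite !eg.
apply: (@eq_trans _ _ (m1 * u1 * (expR (gamma * pV) * expR (gamma * f1) * expR (gamma * f2) * nu x / a / D))); first ring.
rewrite h1 -h2; ring.
Qed.

Definition term (W W' : state X) x yb y : R :=
  if (0 < W (x, yb))%N && avail E beta (sub_e W x yb) x y then
    nu x * ((W (x, yb))%:R / (rowsum W x)%:R) * pchoice E beta lambda kc ka gamma (sub_e W x yb) x y
    * (add_e (sub_e W x yb) x y == W')%:R
  else 0.

Lemma rate_eq (Pall Pdis : state X -> X -> R) W W' :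
  (forall x, Pall W x = 0) -> (forall x, Pdis W x = 1) ->
  rate E beta lambda kc ka gamma nu Pall Pdis W W' = \sum_x \sum_yb \sum_y term W W' x yb y.
Proof.
move=> hA hD; rewrite /rate; apply: eq_bigr => x _.
rewrite hA hD mul0r add0r mul1r mulr_sumr [in LHS]big_mkcond /=; apply: eq_bigr => yb _.
rewrite /term; case: (0 < W (x, yb))%N; last first.
  by rewrite big1.
rewrite !mulr_sumr [in LHS]big_mkcond /=; apply: eq_bigr => y _.
case: ifP => _ //. by rewrite !mulrA.
Qed.

Lemma sub_add (W : state X) x y : (0 < W (x, y))%N -> add_e (sub_e W x y) x y = W.
Proof. move=> h; apply/ffunP => p; rewrite !ffunE; case: eqP => [->|_] /=; lia. Qed.

Lemma add_sub (W : state X) x y : sub_e (add_e W x y) x y = W.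
Proof. apply/ffunP => p; rewrite !ffunE; case: eqP => _ /=; lia. Qed.

Lemma sym_lem (W W' : state X) x y yb :
  W != W' -> (0 < W' (x, y))%N -> add_e (sub_e W' x y) x yb = W ->
  [/\ (0 < W (x, yb))%N, sub_e W x yb = sub_e W' x y & add_e (sub_e W x yb) x y = W'].
Proof.
move=> ne hp hW.
have hyy : y != yb.
  apply/eqP => e; subst yb. by move: ne; rewrite -hW sub_add // eqxx.
have hs : sub_e W x yb = sub_e W' x y by rewrite -hW add_sub.
split => //; last by rewrite hs sub_add.
rewrite -hW ffunE eqxx; lia.
Qed.


Definition Cst (U : state X) : R :=
  multinom alpha R U * expR (gamma * Psi beta lambda kc ka U).

Lemma avail_of (U V : state X) x y :
  alloc E alpha beta U -> add_e V x y = U -> avail E beta V x y.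
Proof.
move=> [[hE _ hc] _] hU; apply/andP; split.
  apply/negPn/negP => /hE; rewrite -hU ffunE eqxx; lia.
have := hc y; rewrite -hU colsum_add eqxx; lia.
Qed.

Lemma pt (W W' : state X) x yb y :
  alloc E alpha beta W -> alloc E alpha beta W' -> W != W' ->
  Cst W * term W W' x yb y = Cst W' * term W' W x y yb.
Proof.
move=> aW aW' ne.
case h: ((0 < W (x, yb))%N && (add_e (sub_e W x yb) x y == W')).
  move/andP: h => [hp /eqP hW'].
  have hW : add_e (sub_e W x yb) x yb = W by apply: sub_add.
  have hV' : sub_e W' x y = sub_e W x yb by rewrite -hW' add_sub.
  have hp' : (0 < W' (x, y))%N by rewrite -hW' ffunE eqxx; lia.
  have av1 : avail E beta (sub_e W x yb) x y by apply: avail_of aW' hW'.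
  have av2 : avail E beta (sub_e W x yb) x yb by apply: avail_of aW hW.
  rewrite /term hV' hp hp' av1 av2 /= hW' hW !eqxx.
  have [_ ->] := aW. have [_ ->] := aW'.
  have := core (sub_e W x yb) x y yb (alpha x)%:R.
  by rewrite hW hW' /Cst.
have -> : term W W' x yb y = 0.
  rewrite /term; case: ifP => [/andP[hp _]|_] //.
  by move: h; rewrite hp /= => /negbT/negbTE ->; rewrite mulr0.
have -> : term W' W x y yb = 0.
  rewrite /term; case: ifP => [/andP[hp' _]|_] //.
  case: eqP => [hW|_]; last by rewrite mulr0.
  have [a _ c] := sym_lem _ _ _ _ _ ne hp' hW.
  by move: h; rewrite a c eqxx.
by rewrite !mulr0.
Qed.

End M.

Theorem proposition2 (X : finType) (E : rel X) (alpha beta : X -> nat)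
  (R : realType) (lambda : X -> R) (kc ka gamma : R)
  (nu : X -> R) (Pall Pdis : state X -> X -> R) :
  0 <= kc -> 0 <= ka -> 0 < gamma ->
  (forall x, 0 <= nu x) ->
  (forall W, partial_alloc E alpha beta W -> forall x,
      [/\ 0 <= Pall W x, 0 <= Pdis W x, Pall W x + Pdis W x = 1,
          (rowsum W x = alpha x -> Pall W x = 0) &
          (rowsum W x = 0%N -> Pdis W x = 0)]) ->
  forall W W' : state X,
    alloc E alpha beta W -> alloc E alpha beta W' -> W != W' ->
    multinom alpha R W * expR (gamma * Psi beta lambda kc ka W)
      * rate E beta lambda kc ka gamma nu Pall Pdis W W'
    = multinom alpha R W' * expR (gamma * Psi beta lambda kc ka W')
      * rate E beta lambda kc ka gamma nu Pall Pdis W' W.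
Proof.
move=> _ _ _ _ hP W W' aW aW' ne.
have hPA : forall U, alloc E alpha beta U -> forall x, Pall U x = 0.
  by move=> U [pU rU] x; have [_ _ _ h _] := hP U pU x; exact: h.
have hPD : forall U, alloc E alpha beta U -> forall x, Pdis U x = 1.
  move=> U aU x; have [pU _] := aU; have [_ _ h _ _] := hP U pU x.
  by rewrite hPA // add0r in h.
rewrite !(rate_eq _ _ _ _ _ _ _ _ _ _ _ _ _ (hPA _ aW) (hPD _ aW)).
rewrite !(rate_eq _ _ _ _ _ _ _ _ _ _ _ _ _ (hPA _ aW') (hPD _ aW')).
rewrite !mulr_sumr; apply: eq_bigr => x _.
rewrite [in RHS]exchange_big /= !mulr_sumr; apply: eq_bigr => yb _.
rewrite !mulr_sumr; apply: eq_bigr => y _.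
exact: pt.
Qed.
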